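(* Let $(G,\cdot)$ be a semigroup, $(G,\curlywedge)$ a semilattice on the same set $G$, and $\xi,\delta\subseteq G\times G$ binary relations. Then $(G,\cdot,\curlywedge,\xi,\delta)$ is isomorphic to some transformative $\cap$-semigroup of transformations $(\Phi,\cdot,\cap,\xi_\Phi,\delta_\Phi)$ if and only if all of the following hold: (1) $\xi$ is left regular (i.e. $(u,v)\in\xi\Rightarrow(xu,xv)\in\xi$ for all $x,u,v\in G$) and contains the semilattice order $\zeta$; (2) $\delta$ is a left ideal of $(G,\cdot)$ (i.e. $(x,y)\in\delta\Rightarrow(ux,y)\in\delta$ for all $x,y,u\in G$); (3) for all $x,y,z,u,v\in G$: $x(y\curlywedge z)=xy\curlywedge xz$; \ $x\leqslant y\wedge u\leqslant v\wedge y\downarrow v\Rightarrow u\downarrow x$; \ $x\downarrow y\Rightarrow (x\curlywedge y)u=xu\curlywedge yu$; (4) for every positive integer $n$ and all $x,y\in G$ the following axioms hold: $A_n$: if $\mathfrak{X}_n(x\curlywedge y,\{x\})$ then $x\curlywedge y=x$; $B_n$: if $\mathfrak{X}_n(x\curlywedge y,\{x,y\})$ then $(x,y)\in\xi$; $C_n$: if $\mathfrak{X}_n(xy,\{x\})$ then $(x,y)\in\delta$.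
   Context: Notation on $G$: $x\leqslant y$ iff $x\curlywedge y=x$ (the semilattice order $\zeta$); $x\downarrow y$ iff $(x,y)\in\xi$; $x\vdash y$ iff $(x,y)\in\delta$. $G^*=G\cup\{e\}$ is the semigroup obtained by adjoining a new identity $e\notin G$, with conventions $e\leqslant e$, $e\vdash e$, and $x\vdash e$ for all $x\in G$. The formula $a\boxdot b\leqslant c$ abbreviates $a\vdash b\wedge ab\leqslant c$. For a positive integer $n$, $z\in G$ and $H\subseteq G$, $\mathfrak{X}_n(z,H)$ is the statement: there exist $x_i,y_i,t_i\in G^*$ and $u_i,v_i\in G$ ($1\le i\le 2^n-1$) such that (a) $u_1\downarrow v_1$ and $(u_1\curlywedge v_1)x_1\boxdot y_1\leqslant z t_1$; (b) for every $i$ with $1\le i\le 2^{n-1}-1$: $u_{2i}\downarrow v_{2i}$, $(u_{2i}\curlywedge v_{2i})x_{2i}\boxdot y_{2i}\leqslant u_i t_{2i}$, $u_{2i+1}\downarrow v_{2i+1}$ and $(u_{2i+1}\curlywedge v_{2i+1})x_{2i+1}\boxdot y_{2i+1}\leqslant v_i x_i t_{2i+1}$; (c) for every $i$ with $2^{n-1}\le i\le 2^n-1$: $u_i\in H$ and $v_ix_i\in H$. Transformations: for a nonempty set $A$, a transformation is a partial map $A\to A$ regarded as a subset of $A\times A$, with domain $\mathrm{pr}_1 f$ and image $\mathrm{pr}_2 f$. The product $f\cdot g$ is ''first $f$, then $g$'': $(f\cdot g)(a)=g(f(a))$, defined exactly when $a\in\mathrm{pr}_1 f$ and $f(a)\in\mathrm{pr}_1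 g$. A transformative $\cap$-semigroup of transformations is $(\Phi,\cdot,\cap,\xi_\Phi,\delta_\Phi)$ where $\Phi$ is a set of transformations of a nonempty set $A$ closed under this product and under set-theoretic intersection, $\xi_\Phi=\{(f,g):f$ and $g$ coincide on $\mathrm{pr}_1 f\cap\mathrm{pr}_1 g\}$, and $\delta_\Phi=\{(f,g):\mathrm{pr}_2 f\subseteq\mathrm{pr}_1 g\}$. *)

(* Defs.v *)
From Stdlib Require Import Arith.

Definition sle {G : Type} (meet : G -> G -> G) (x y : G) : Prop := meet x y = x.

(* G-star = option G, with None playing the role of the adjoined identity e.
   [act mul a t] is the product a t in G-star for a in G, t in G*. *)
Definition act {G : Type} (mul : G -> G -> G) (a : G) (t : option G) : G :=
  match t with Some t' => mul a t' | None => a end.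

Definition vdashS {G : Type} (delta : G -> G -> Prop) (a : G) (b : option G) : Prop :=
  match b with Some b' => delta a b' | None => True end.

Definition boxdot {G : Type} (mul meet : G -> G -> G) (delta : G -> G -> Prop)
  (a : G) (b : option G) (c : G) : Prop :=
  vdashS delta a b /\ sle meet (act mul a b) c.

(* The statement X_n(z, H); the families are indexed by nat, only the
   indices 1 .. 2^n - 1 matter. *)
Definition Xn {G : Type} (mul meet : G -> G -> G) (xi delta : G -> G -> Prop)
  (n : nat) (z : G) (H : G -> Prop) : Prop :=
  exists (x y t : nat -> option G) (u v : nat -> G),
    (xi (u 1) (v 1) /\
     boxdot mul meet delta (act mul (meet (u 1) (v 1)) (x 1)) (y 1) (act mul z (t 1)))
    /\ (forall i, 1 <= i <= 2 ^ (n - 1) - 1 ->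
          xi (u (2 * i)) (v (2 * i)) /\
          boxdot mul meet delta (act mul (meet (u (2 * i)) (v (2 * i))) (x (2 * i)))
                 (y (2 * i)) (act mul (u i) (t (2 * i))) /\
          xi (u (2 * i + 1)) (v (2 * i + 1)) /\
          boxdot mul meet delta
                 (act mul (meet (u (2 * i + 1)) (v (2 * i + 1))) (x (2 * i + 1)))
                 (y (2 * i + 1)) (act mul (act mul (v i) (x i)) (t (2 * i + 1))))
    /\ (forall i, 2 ^ (n - 1) <= i <= 2 ^ n - 1 ->
          H (u i) /\ H (act mul (v i) (x i))).

Definition transformation {A : Type} (f : A -> A -> Prop) : Prop :=
  forall a b c, f a b -> f a c -> b = c.

Definition tcomp {A : Type} (f g : A -> A -> Prop) : A -> A -> Prop :=
  fun a c => exists b, f a b /\ g b c.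

Definition tcap {A : Type} (f g : A -> A -> Prop) : A -> A -> Prop :=
  fun a b => f a b /\ g a b.

Definition xiT {A : Type} (f g : A -> A -> Prop) : Prop :=
  forall a b c, f a b -> g a c -> b = c.

Definition deltaT {A : Type} (f g : A -> A -> Prop) : Prop :=
  forall a b, f a b -> exists c, g b c.

Definition cap_semigroup_of_transformations {A : Type}
  (Phi : (A -> A -> Prop) -> Prop) : Prop :=
  (forall f, Phi f -> transformation f) /\
  (forall f g, Phi f -> Phi g -> Phi (tcomp f g)) /\
  (forall f g, Phi f -> Phi g -> Phi (tcap f g)).

Definition is_iso {G A : Type} (mul meet : G -> G -> G) (xi delta : G -> G -> Prop)
  (Phi : (A -> A -> Prop) -> Prop) (F : G -> A -> A -> Prop) : Prop :=
  (forall x, Phi (F x)) /\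
  (forall f, Phi f -> exists x, F x = f) /\
  (forall x y, F x = F y -> x = y) /\
  (forall x y, F (mul x y) = tcomp (F x) (F y)) /\
  (forall x y, F (meet x y) = tcap (F x) (F y)) /\
  (forall x y, xi x y <-> xiT (F x) (F y)) /\
  (forall x y, delta x y <-> deltaT (F x) (F y)).

Definition representable {G : Type} (mul meet : G -> G -> G) (xi delta : G -> G -> Prop)
  : Prop :=
  exists (A : Type), inhabited A /\
    exists (Phi : (A -> A -> Prop) -> Prop) (F : G -> A -> A -> Prop),
      cap_semigroup_of_transformations Phi /\ is_iso mul meet xi delta Phi F.

(* Main.v *)
Require Import Defs.
From Stdlib Require Import Arith Lia FunctionalExtensionality PropExtensionality.

Lemma pow2_S n : 1 <= n -> 2 ^ n = 2 * 2 ^ (n - 1).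
Proof. intros H. destruct n; [lia|]. simpl. rewrite Nat.sub_0_r. lia. Qed.

Lemma Xn_ind {G : Type} (mul meet : G -> G -> G) (xi delta : G -> G -> Prop)
  n z (H : G -> Prop) (Q : G -> Prop) :
  (forall w, H w -> Q w) ->
  (forall u v x y t w, xi u v ->
     boxdot mul meet delta (act mul (meet u v) x) y (act mul w t) ->
     Q u -> Q (act mul v x) -> Q w) ->
  1 <= n -> Xn mul meet xi delta n z H -> Q z.
Proof.
  intros HQ HN Hn [x [y [t [u [v [Ha [Hb Hc]]]]]]].
  set (zf := fun i => if i =? 1 then z else if Nat.even i then u (Nat.div2 i)
                      else act mul (v (Nat.div2 i)) (x (Nat.div2 i))).
  assert (Z2 : forall i, 1 <= i -> zf (2 * i) = u i).
  { intros i Hi. unfold zf. destruct (Nat.eqb_spec (2*i) 1); [lia|].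
    rewrite Nat.even_even, Nat.div2_double. reflexivity. }
  assert (Z3 : forall i, 1 <= i -> zf (2 * i + 1) = act mul (v i) (x i)).
  { intros i Hi. unfold zf. destruct (Nat.eqb_spec (2*i+1) 1); [lia|].
    replace (Nat.even (2*i+1)) with false.
    - rewrite Nat.div2_odd'. reflexivity.
    - rewrite Nat.even_add, Nat.even_even. reflexivity. }
  assert (P2 := pow2_S n Hn).
  assert (NODE : forall i, 1 <= i <= 2 ^ n - 1 ->
     xi (u i) (v i) /\ boxdot mul meet delta (act mul (meet (u i) (v i)) (x i)) (y i)
        (act mul (zf i) (t i))).
  { intros i Hi. destruct (Nat.eqb_spec i 1) as [->|Hne].
    - exact Ha.
    - destruct (Nat.Even_or_Odd i) as [[j ->]|[j ->]].
      + destruct (Hb j) as [B1 [B2 _]]; [lia|]. rewrite Z2 by lia. auto.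
      + destruct (Hb j) as [_ [_ [B3 B4]]]; [lia|]. rewrite Z3 by lia. auto. }
  assert (MAIN : forall m i, 1 <= i <= 2 ^ n - 1 -> 2 ^ n - 1 - i < m -> Q (zf i)).
  { induction m as [|m IH]; intros i Hi Hm; [lia|].
    destruct (NODE i Hi) as [N1 N2].
    apply (HN _ _ _ _ _ _ N1 N2).
    - destruct (le_lt_dec (2 ^ (n-1)) i).
      + apply HQ, (proj1 (Hc i ltac:(lia))).
      + rewrite <- Z2 by lia. apply IH; lia.
    - destruct (le_lt_dec (2 ^ (n-1)) i).
      + apply HQ, (proj2 (Hc i ltac:(lia))).
      + rewrite <- Z3 by lia. apply IH; lia. }
  assert (0 < 2 ^ (n-1)) by (apply Nat.neq_0_lt_0, Nat.pow_nonzero; lia).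
  change z with (zf 1). apply (MAIN (2 ^ n)); lia.
Qed.

Definition merge {T : Type} (r : T) (L R : nat -> T) (i : nat) : T :=
  if i =? 1 then r else
  let d := Nat.log2 i in
  if i <? 2 ^ d + 2 ^ (d - 1) then L (i - 2 ^ (d - 1)) else R (i - 2 ^ d).

Lemma merge_1 {T} (r : T) L R : merge r L R 1 = r.
Proof. reflexivity. Qed.
Lemma merge_2 {T} (r : T) L R : merge r L R 2 = L 1.
Proof. reflexivity. Qed.
Lemma merge_3 {T} (r : T) L R : merge r L R 3 = R 1.
Proof. reflexivity. Qed.

Lemma log2_eq i m : 2 ^ m <= i < 2 ^ S m -> Nat.log2 i = m.
Proof. intros. apply Nat.log2_unique; lia. Qed.

Lemma merge_step i : 2 <= i -> exists j, 1 <= j /\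
  (forall m, 2 ^ m <= i < 2 ^ S m -> 2 ^ (m - 1) <= j < 2 ^ m) /\
  (((forall T (r : T) L R, merge r L R i = L j) /\
    (forall T (r : T) L R, merge r L R (2 * i) = L (2 * j)) /\
    (forall T (r : T) L R, merge r L R (2 * i + 1) = L (2 * j + 1))) \/
   ((forall T (r : T) L R, merge r L R i = R j) /\
    (forall T (r : T) L R, merge r L R (2 * i) = R (2 * j)) /\
    (forall T (r : T) L R, merge r L R (2 * i + 1) = R (2 * j + 1)))).
Proof.
  intros Hi.
  destruct (Nat.log2_spec i ltac:(lia)) as [S1 S2].
  set (d := Nat.log2 i) in *.
  assert (Hd : 1 <= d).
  { destruct d as [|d']; [simpl in *; lia | lia]. }
  set (P := 2 ^ (d - 1)).
  assert (E1 : 2 ^ d = 2 * P).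
  { unfold P. destruct d; [lia|]. simpl. rewrite Nat.sub_0_r. lia. }
  assert (E2 : 2 ^ S d = 4 * P) by (simpl; lia).
  assert (E3 : 2 ^ S (S d) = 8 * P) by (change (2 ^ S (S d)) with (2 * 2 ^ S d); lia).
  assert (P1 : 1 <= P) by (unfold P; apply Nat.neq_0_lt_0, Nat.pow_nonzero; lia).
  assert (L2 : Nat.log2 (2 * i) = S d) by (apply log2_eq; lia).
  assert (L3 : Nat.log2 (2 * i + 1) = S d) by (apply log2_eq; lia).
  assert (Sd : S d - 1 = d) by lia.
  assert (RNG : forall m, 2 ^ m <= i < 2 ^ S m -> m = d)
    by (intros m Hm; symmetry; now apply log2_eq).
  destruct (Nat.ltb_spec i (2 ^ d + 2 ^ (d - 1))) as [Hl|Hl].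
  - exists (i - P). split; [lia|]. split.
    + intros m Hm. rewrite (RNG m Hm). fold P. lia.
    + left. split; [|split]; intros T r L R; unfold merge.
      * destruct (Nat.eqb_spec i 1); [lia|]. fold d. rewrite (proj2 (Nat.ltb_lt _ _) Hl). reflexivity.
      * destruct (Nat.eqb_spec (2 * i) 1); [lia|]. rewrite L2, Sd.
        destruct (Nat.ltb_spec (2 * i) (2 ^ S d + 2 ^ d)); [|lia].
        f_equal. fold P. lia.
      * destruct (Nat.eqb_spec (2 * i + 1) 1); [lia|]. rewrite L3, Sd.
        destruct (Nat.ltb_spec (2 * i + 1) (2 ^ S d + 2 ^ d)); [|lia].
        f_equal. fold P. lia.
  - exists (i - 2 * P). split; [lia|]. split.
    + intros m Hm. rewrite (RNG m Hm). fold P. lia.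
    + right. split; [|split]; intros T r L R; unfold merge.
      * destruct (Nat.eqb_spec i 1); [lia|]. fold d.
        destruct (Nat.ltb_spec i (2 ^ d + 2 ^ (d - 1))); [lia|]. f_equal. lia.
      * destruct (Nat.eqb_spec (2 * i) 1); [lia|]. rewrite L2, Sd.
        destruct (Nat.ltb_spec (2 * i) (2 ^ S d + 2 ^ d)); [lia|].
        f_equal. lia.
      * destruct (Nat.eqb_spec (2 * i + 1) 1); [lia|]. rewrite L3, Sd.
        destruct (Nat.ltb_spec (2 * i + 1) (2 ^ S d + 2 ^ d)); [lia|].
        f_equal. lia.
Qed.

Lemma merge_Xn {G : Type} (mul meet : G -> G -> G) (xi delta : G -> G -> Prop)
  k (H : G -> Prop) z u0 v0 x0 y0 t0 :
  1 <= k -> xi u0 v0 ->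
  boxdot mul meet delta (act mul (meet u0 v0) x0) y0 (act mul z t0) ->
  Xn mul meet xi delta k u0 H -> Xn mul meet xi delta k (act mul v0 x0) H ->
  Xn mul meet xi delta (S k) z H.
Proof.
  intros Hk N1 N2 [xL [yL [tL [uL [vL [LA [LB LC]]]]]]]
                  [xR [yR [tR [uR [vR [RA [RB RC]]]]]]].
  exists (merge x0 xL xR), (merge y0 yL yR), (merge t0 tL tR),
         (merge u0 uL uR), (merge v0 vL vR).
  assert (Pk : 2 ^ k = 2 * 2 ^ (k - 1)).
  { destruct k; [lia|]. simpl. rewrite Nat.sub_0_r. lia. }
  assert (Sk : S k - 1 = k) by lia.
  rewrite Sk.
  split; [|split].
  - rewrite !merge_1. auto.
  - intros i Hi. destruct (Nat.eqb_spec i 1) as [->|Hne].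
    + change (2 * 1) with 2. change (2 * 1 + 1) with 3.
      rewrite !merge_1, !merge_2, !merge_3. tauto.
    + destruct (merge_step i ltac:(lia)) as [j [Hj [Rj [[E1 [E2 E3]]|[E1 [E2 E3]]]]]].
      * destruct (Nat.log2_spec i ltac:(lia)) as [S1 S2].
        specialize (Rj _ (conj S1 S2)).
        assert (Nat.log2 i < k) by (apply Nat.log2_lt_pow2; lia).
        assert (2 ^ Nat.log2 i <= 2 ^ (k - 1)) by (apply Nat.pow_le_mono_r; lia).
        rewrite !E1, !E2, !E3. apply LB. lia.
      * destruct (Nat.log2_spec i ltac:(lia)) as [S1 S2].
        specialize (Rj _ (conj S1 S2)).
        assert (Nat.log2 i < k) by (apply Nat.log2_lt_pow2; lia).
        assert (2 ^ Nat.log2 i <= 2 ^ (k - 1)) by (apply Nat.pow_le_mono_r; lia).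
        rewrite !E1, !E2, !E3. apply RB. lia.
  - intros i Hi.
    assert (0 < 2 ^ (k-1)) by (apply Nat.neq_0_lt_0, Nat.pow_nonzero; lia).
    assert (ESk : 2 ^ S k = 2 * 2 ^ k) by (simpl; lia).
    destruct (merge_step i ltac:(lia)) as [j [Hj [Rj [[E1 [E2 E3]]|[E1 [E2 E3]]]]]].
    + assert (Rk := Rj k ltac:(lia)).
      rewrite !E1. apply LC. lia.
    + assert (Rk := Rj k ltac:(lia)).
      rewrite !E1. apply RC. lia.
Qed.

Fixpoint Tr {G : Type} (mul meet : G -> G -> G) (xi delta : G -> G -> Prop)
  (H : G -> Prop) (n : nat) (w : G) : Prop :=
  match n with
  | 0 => H w
  | S k => exists u v x y t, xi u v /\
      boxdot mul meet delta (act mul (meet u v) x) y (act mul w t) /\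
      Tr mul meet xi delta H k u /\ Tr mul meet xi delta H k (act mul v x)
  end.

Lemma Tr_Xn {G : Type} (mul meet : G -> G -> G) (xi delta : G -> G -> Prop) H n :
  forall w, 1 <= n -> Tr mul meet xi delta H n w -> Xn mul meet xi delta n w H.
Proof.
  induction n as [|k IH]; intros w Hn HT; [lia|].
  destruct HT as [u [v [x [y [t [N1 [N2 [T1 T2]]]]]]]].
  destruct k as [|k'].
  - exists (fun _ => x), (fun _ => y), (fun _ => t), (fun _ => u), (fun _ => v).
    simpl. split; [auto|split].
    + intros i Hi. lia.
    + intros i Hi. auto.
  - apply (merge_Xn mul meet xi delta (S k') H w u v x y t); auto; [lia | apply IH; auto; lia | apply IH; auto; lia].
Qed.

Lemma Tr_S {G : Type} (mul meet : G -> G -> G) (xi delta : G -> G -> Prop) H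
  (meet_idem : forall x, meet x x = x) (xi_refl : forall x, xi x x) :
  forall n w, Tr mul meet xi delta H n w -> Tr mul meet xi delta H (S n) w.
Proof.
  induction n as [|n IH]; intros w HT.
  - exists w, w, None, None, None. simpl. unfold boxdot, sle; simpl.
    rewrite !meet_idem. auto.
  - destruct HT as [u [v [x [y [t [N1 [N2 [T1 T2]]]]]]]].
    exists u, v, x, y, t. simpl in *. auto.
Qed.

Lemma Tr_mono {G : Type} (mul meet : G -> G -> G) (xi delta : G -> G -> Prop) H
  (meet_idem : forall x, meet x x = x) (xi_refl : forall x, xi x x) :
  forall n m w, n <= m -> Tr mul meet xi delta H n w -> Tr mul meet xi delta H m w.
Proof.
  intros n m w Hnm. induction Hnm; auto.
  intros HT. apply Tr_S; auto.
Qed.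

Lemma rel_ext {A : Type} (f g : A -> A -> Prop) :
  (forall a b, f a b <-> g a b) -> f = g.
Proof.
  intros Hfg. apply functional_extensionality; intro a.
  apply functional_extensionality; intro b. apply propositional_extensionality. auto.
Qed.

Lemma necessity {G : Type} (mul meet : G -> G -> G) (xi delta : G -> G -> Prop)
  (A : Type) (Phi : (A -> A -> Prop) -> Prop) (F : G -> A -> A -> Prop) :
  cap_semigroup_of_transformations Phi -> is_iso mul meet xi delta Phi F ->
  ( ((forall x u v, xi u v -> xi (mul x u) (mul x v)) /\
     (forall x y, sle meet x y -> xi x y)) /\
    (forall x y u, delta x y -> delta (mul u x) y) /\
    ((forall x y z, mul x (meet y z) = meet (mul x y) (mul x z)) /\
     (forall x y u v, sle meet x y -> sle meet u v -> xi y v -> xi u x) /\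
     (forall x y u, xi x y -> mul (meet x y) u = meet (mul x u) (mul y u))) /\
    (forall n, 1 <= n -> forall x y,
       (Xn mul meet xi delta n (meet x y) (fun w => w = x) -> meet x y = x) /\
       (Xn mul meet xi delta n (meet x y) (fun w => w = x \/ w = y) -> xi x y) /\
       (Xn mul meet xi delta n (mul x y) (fun w => w = x) -> delta x y)) ).
Proof.
  intros [Tf _] [PhiF [_ [Finj [Fmul [Fmeet [Fxi Fdelta]]]]]].
  assert (FT : forall x a b c, F x a b -> F x a c -> b = c).
  { intros x. exact (Tf _ (PhiF x)). }
  assert (Mul : forall x y a b, F (mul x y) a b <-> exists c, F x a c /\ F y c b).
  { intros. rewrite Fmul. reflexivity. }
  assert (Meet : forall x y a b, F (meet x y) a b <-> F x a b /\ F y a b).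
  { intros. rewrite Fmeet. reflexivity. }
  assert (Le : forall x y a b, sle meet x y -> F x a b -> F y a b).
  { intros x y a b Hs Hx. unfold sle in Hs. rewrite <- Hs in Hx.
    apply Meet in Hx. tauto. }
  assert (Xi : forall x y, xi x y <-> (forall a b c, F x a b -> F y a c -> b = c)).
  { intros. rewrite Fxi. reflexivity. }
  assert (De : forall x y, delta x y <-> (forall a b, F x a b -> exists c, F y b c)).
  { intros. rewrite Fdelta. reflexivity. }
  assert (Act : forall p o a b, F (act mul p o) a b <->
             match o with None => F p a b | Some q => exists c, F p a c /\ F q c b end).
  { intros p [q|] a b; simpl; [apply Mul | reflexivity]. }
  assert (NODE : forall u v x y t w a, xi u v ->
     boxdot mul meet delta (act mul (meet u v) x) y (act mul w t) ->
     (exists b, F u a b) -> (exists b, F (act mul v x) a b) -> exists b, F w a b).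
  { intros u v x y t w a Huv [Hd Hs] [b1 Hb1] [b2 Hb2].
    assert (HP : exists b3, F (act mul (meet u v) x) a b3).
    { apply Act in Hb2. destruct x as [q|].
      - destruct Hb2 as [c [Hc1 Hc2]].
        assert (b1 = c) by (apply (proj1 (Xi u v) Huv a); auto). subst c.
        exists b2. apply Act. exists b1. split; auto. apply Meet. auto.
      - assert (b1 = b2) by (apply (proj1 (Xi u v) Huv a); auto). subst.
        exists b2. apply Act, Meet. auto. }
    destruct HP as [b3 Hb3].
    assert (HQ : exists b4, F (act mul (act mul (meet u v) x) y) a b4).
    { destruct y as [q|]; simpl in Hd.
      - destruct (proj1 (De _ _) Hd a b3 Hb3) as [b4 Hb4].
        exists b4. apply Act. eauto.
      - exists b3. exact Hb3. }
    destruct HQ as [b4 Hb4].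
    apply (Le _ _ _ _ Hs) in Hb4. apply Act in Hb4.
    destruct t as [q|].
    - destruct Hb4 as [c [Hc _]]. eauto.
    - eauto. }
  split; [split|split; [|split; [split; [|split]|]]].
  - intros x u v Huv. apply Xi. intros a b c Hb Hc.
    apply Mul in Hb as [d [Hd1 Hd2]]. apply Mul in Hc as [e [He1 He2]].
    assert (d = e) by (eapply FT; eauto). subst e.
    apply (proj1 (Xi u v) Huv d); auto.
  - intros x y Hs. apply Xi. intros a b c Hb Hc.
    apply (Le _ _ _ _ Hs) in Hb. eapply FT; eauto.
  - intros x y u Hd. apply De. intros a b Hb.
    apply Mul in Hb as [c [Hc1 Hc2]]. apply (proj1 (De _ _) Hd c); auto.
  - intros x y z. apply Finj. rewrite Fmul, !Fmeet, !Fmul. apply rel_ext.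
    intros a b. unfold tcomp, tcap. split.
    + intros [c [H1 [H2 H3]]]. split; eauto.
    + intros [[c [H1 H2]] [d [H3 H4]]].
      assert (c = d) by (eapply FT; eauto). subst. eauto.
  - intros x y u v Hxy Huv Hyv. apply Xi. intros a b c Hb Hc.
    apply (Le _ _ _ _ Huv) in Hb. apply (Le _ _ _ _ Hxy) in Hc.
    symmetry. apply (proj1 (Xi y v) Hyv a); auto.
  - intros x y u Hxy. apply Finj. rewrite Fmul, !Fmeet, !Fmul. apply rel_ext.
    intros a b. unfold tcomp, tcap. split.
    + intros [c [[H1 H2] H3]]. split; eauto.
    + intros [[c [H1 H2]] [d [H3 H4]]].
      assert (c = d) by (apply (proj1 (Xi x y) Hxy a); auto). subst. eauto.
  - intros n Hn x y. split; [|split].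
    + intros HX.
      assert (HD : forall a, (exists b, F x a b) -> exists b, F (meet x y) a b).
      { apply (Xn_ind mul meet xi delta n (meet x y) (fun w => w = x)
           (fun w => forall a, (exists b, F x a b) -> exists b, F w a b)); auto.
        - intros w -> a Ha. exact Ha.
        - intros u v x' y' t w Huv Hbox Hu Hv a Ha. eapply NODE; eauto. }
      apply Finj. apply rel_ext. intros a b. split.
      * intros Hm. apply Meet in Hm. tauto.
      * intros Hb. destruct (HD a (ex_intro _ b Hb)) as [c Hc].
        pose proof Hc as Hc'. apply Meet in Hc' as [Hc1 Hc2].
        assert (b = c) by (eapply FT; eauto). subst. exact Hc.
    + intros HX.
      assert (HD : forall a, (exists b, F x a b) /\ (exists b, F y a b) ->
                   exists b, F (meet x y) a b).
      { apply (Xn_ind mul meet xi delta n (meet x y) (fun w => w = x \/ w = y)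
           (fun w => forall a, (exists b, F x a b) /\ (exists b, F y a b) ->
                     exists b, F w a b)); auto.
        - intros w [->| ->] a Ha; tauto.
        - intros u v x' y' t w Huv Hbox Hu Hv a Ha. eapply NODE; eauto. }
      apply Xi. intros a b c Hb Hc.
      destruct (HD a (conj (ex_intro _ b Hb) (ex_intro _ c Hc))) as [d Hd].
      apply Meet in Hd as [Hd1 Hd2].
      transitivity d; [eapply FT; eauto | symmetry; eapply FT; eauto].
    + intros HX.
      assert (HD : forall a, (exists b, F x a b) -> exists b, F (mul x y) a b).
      { apply (Xn_ind mul meet xi delta n (mul x y) (fun w => w = x)
           (fun w => forall a, (exists b, F x a b) -> exists b, F w a b)); auto.
        - intros w -> a Ha. exact Ha.
        - intros u v x' y' t w Huv Hbox Hu Hv a Ha. eapply NODE; eauto. }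
      apply De. intros a b Hb.
      destruct (HD a (ex_intro _ b Hb)) as [d Hd].
      apply Mul in Hd as [c [Hc1 Hc2]].
      assert (b = c) by (eapply FT; eauto). subst. eauto.
Qed.

Definition lact {G : Type} (mul : G -> G -> G) (a : option G) (x : G) : G :=
  match a with None => x | Some a' => mul a' x end.
Definition DD {G : Type} (mul meet : G -> G -> G) (xi delta : G -> G -> Prop)
  (H : G -> Prop) (w : G) : Prop := exists n, Tr mul meet xi delta H n w.
Definition eps {G : Type} (mul meet : G -> G -> G) (xi delta : G -> G -> Prop)
  (H : G -> Prop) (a b : option G) : Prop :=
  a = b \/ exists p q, a = Some p /\ b = Some q /\ DD mul meet xi delta H (meet p q).
Definition cls {G : Type} (mul meet : G -> G -> G) (xi delta : G -> G -> Prop)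
  (H : G -> Prop) (a : option G) : option G -> Prop :=
  fun b => eps mul meet xi delta H a b.
Definition FF {G : Type} (mul meet : G -> G -> G) (xi delta : G -> G -> Prop)
  (x : G) (p1 p2 : (G -> Prop) * (option G -> Prop)) : Prop :=
  fst p2 = fst p1 /\ exists a, snd p1 = cls mul meet xi delta (fst p1) a /\
    DD mul meet xi delta (fst p1) (lact mul a x) /\
    snd p2 = cls mul meet xi delta (fst p1) (Some (lact mul a x)).

Lemma Tr_node {G : Type} (mul meet : G -> G -> G) (xi delta : G -> G -> Prop) H k
  u v x y t w : xi u v ->
  boxdot mul meet delta (act mul (meet u v) x) y (act mul w t) ->
  Tr mul meet xi delta H k u -> Tr mul meet xi delta H k (act mul v x) ->
  Tr mul meet xi delta H (S k) w.
Proof. intros. simpl. exists u, v, x, y, t. auto. Qed.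

Lemma D_closure {G : Type} (mul meet : G -> G -> G) (xi delta : G -> G -> Prop)
  (mul_assoc : forall x y z, mul x (mul y z) = mul (mul x y) z)
  (meet_assoc : forall x y z, meet x (meet y z) = meet (meet x y) z)
  (meet_comm : forall x y, meet x y = meet y x)
  (meet_idem : forall x, meet x x = x)
  (zeta_xi : forall x y, sle meet x y -> xi x y)
  (rdist : forall x y u, xi x y -> mul (meet x y) u = meet (mul x u) (mul y u))
  (H : G -> Prop) :
  let D := DD mul meet xi delta H in
  (forall u v x y t w, xi u v ->
     boxdot mul meet delta (act mul (meet u v) x) y (act mul w t) ->
     D u -> D (act mul v x) -> D w).
Proof.
  intros D u v x y t w Huv Hb [n Hn] [m Hm].
  assert (xr : forall x, xi x x) by (intro; apply zeta_xi; apply meet_idem).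
  exists (S (max n m)). apply (Tr_node mul meet xi delta H _ u v x y t); auto.
  - apply (Tr_mono mul meet xi delta H meet_idem xr n); auto; lia.
  - apply (Tr_mono mul meet xi delta H meet_idem xr m); auto; lia.
Qed.

Lemma sufficiency (G : Type) (mul meet : G -> G -> G) (xi delta : G -> G -> Prop)
  (mul_assoc : forall x y z, mul x (mul y z) = mul (mul x y) z)
  (meet_assoc : forall x y z, meet x (meet y z) = meet (meet x y) z)
  (meet_comm : forall x y, meet x y = meet y x)
  (meet_idem : forall x, meet x x = x) :
  ( ((forall x u v, xi u v -> xi (mul x u) (mul x v)) /\
     (forall x y, sle meet x y -> xi x y)) /\
    (forall x y u, delta x y -> delta (mul u x) y) /\
    ((forall x y z, mul x (meet y z) = meet (mul x y) (mul x z)) /\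
     (forall x y u v, sle meet x y -> sle meet u v -> xi y v -> xi u x) /\
     (forall x y u, xi x y -> mul (meet x y) u = meet (mul x u) (mul y u))) /\
    (forall n, 1 <= n -> forall x y,
       (Xn mul meet xi delta n (meet x y) (fun w => w = x) -> meet x y = x) /\
       (Xn mul meet xi delta n (meet x y) (fun w => w = x \/ w = y) -> xi x y) /\
       (Xn mul meet xi delta n (mul x y) (fun w => w = x) -> delta x y)) ) ->
  representable mul meet xi delta.
Proof.
  intros [[xi_lreg zeta_xi] [delta_lid [[ldist [P3b rdist]] AX]]].
  assert (xr : forall x, xi x x) by (intro; apply zeta_xi; apply meet_idem).
  assert (srefl : forall x, sle meet x x) by (intro; apply meet_idem).
  assert (lb_l : forall p q, meet (meet p q) p = meet p q).
  { intros. rewrite meet_comm, meet_assoc, meet_idem. reflexivity. }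
  assert (lb_r : forall p q, meet (meet p q) q = meet p q).
  { intros. rewrite <- meet_assoc, meet_idem. reflexivity. }
  assert (glb : forall a b c, sle meet a b -> sle meet a c -> sle meet a (meet b c)).
  { unfold sle. intros a b c Hb Hc. rewrite meet_assoc, Hb, Hc. reflexivity. }
  assert (mono : forall a b x, sle meet a b -> sle meet (mul a x) (mul b x)).
  { intros a b x Hab. pose proof (rdist a b x (zeta_xi _ _ Hab)) as E.
    unfold sle in *. rewrite Hab in E. symmetry. exact E. }
  assert (strans : forall a b c, sle meet a b -> sle meet b c -> sle meet a c).
  { unfold sle. intros a b c Hab Hbc. rewrite <- Hab, <- meet_assoc, Hbc. reflexivity. }
  pose (D := DD mul meet xi delta).
  assert (mk : forall H u v x y t w, xi u v ->
     boxdot mul meet delta (act mul (meet u v) x) y (act mul w t) ->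
     D H u -> D H (act mul v x) -> D H w).
  { intros H. exact (D_closure mul meet xi delta mul_assoc meet_assoc meet_comm
                       meet_idem zeta_xi rdist H). }
  assert (D1 : forall H p g, D H (mul p g) -> D H p).
  { intros H p g Hp. apply (mk H (mul p g) (mul p g) None None (Some g)); auto.
    unfold boxdot; simpl. rewrite meet_idem. auto. }
  assert (D2 : forall H p q, sle meet p q -> D H p -> D H q).
  { intros H p q Hpq Hp. apply (mk H p p None None None); auto.
    unfold boxdot; simpl. rewrite meet_idem. auto. }
  assert (D3 : forall H a b x, D H (meet a b) -> D H (mul b x) -> D H (mul (meet a b) x)).
  { intros H a b x Hab Hbx. apply (mk H (meet a b) b (Some x) None None); auto.
    - apply zeta_xi. apply lb_r.
    - unfold boxdot; simpl. rewrite lb_r. auto. }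
  assert (D5 : forall H p q, xi p q -> D H p -> D H q -> D H (meet p q)).
  { intros H p q Hpq Hp Hq. apply (mk H p q None None None); auto.
    unfold boxdot; simpl. auto. }
  assert (D6 : forall H p y, delta p y -> D H p -> D H (mul p y)).
  { intros H p y Hpy Hp. apply (mk H p p None (Some y) None); auto.
    unfold boxdot; simpl. rewrite meet_idem. auto. }
  assert (D0 : forall (H : G -> Prop) w, H w -> D H w).
  { intros H w Hw. exists 0. exact Hw. }
  assert (DX : forall H w, D H w -> exists n, 1 <= n /\ Xn mul meet xi delta n w H).
  { intros H w [n Hn]. exists (S n). split; [lia|].
    apply Tr_Xn; [lia|]. apply Tr_S; auto. }
  pose (E := eps mul meet xi delta).
  pose (C := cls mul meet xi delta).
  assert (Erefl : forall H a, E H a a) by (intros; left; reflexivity).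
  assert (Esym : forall H a b, E H a b -> E H b a).
  { intros H a b [->|[p [q [-> [-> Hpq]]]]]; [left; reflexivity|].
    right. exists q, p. rewrite meet_comm. auto. }
  assert (Etrans : forall H a b c, E H a b -> E H b c -> E H a c).
  { intros H a b c [->|[p [q [-> [-> Hpq]]]]] Hbc; [exact Hbc|].
    destruct Hbc as [<-|[q' [r [Hq [-> Hqr]]]]]; [right; exists p, q; auto|].
    injection Hq as <-. right. exists p, r. split; [reflexivity|split; [reflexivity|]].
    assert (Hx : xi (meet q r) (meet p q)).
    { apply (P3b (meet p q) q (meet q r) q); [apply lb_r | apply lb_l | apply xr]. }
    apply (D2 H (meet (meet q r) (meet p q))).
    - apply glb.
      + apply (strans _ (meet p q)); [apply lb_r | apply lb_l].
      + apply (strans _ (meet q r)); [apply lb_l | apply lb_r].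
    - apply D5; auto. }
  assert (Ecls : forall H a b, E H a b -> C H a = C H b).
  { intros H a b Hab. apply functional_extensionality. intro c.
    apply propositional_extensionality. unfold C, cls. fold (E H a c). fold (E H b c).
    split; intro Hc; eauto. }
  assert (clsE : forall H a b, C H a = C H b -> E H a b).
  { intros H a b Hab. assert (Hb : C H b b) by apply Erefl.
    rewrite <- Hab in Hb. exact Hb. }
  assert (lmul : forall a x y, lact mul a (mul x y) = mul (lact mul a x) y).
  { intros [a|] x y; simpl; auto. }
  assert (lmeet : forall a x y, lact mul a (meet x y) = meet (lact mul a x) (lact mul a y)).
  { intros [a|] x y; simpl; auto. }
  assert (V3 : forall H a b x, E H a b -> D H (lact mul a x) ->
      D H (lact mul b x) /\ E H (Some (lact mul a x)) (Some (lact mul b x))).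
  { intros H a b x [<-|[p [q [-> [-> Hpq]]]]] Hax; [split; auto|].
    simpl lact in *.
    assert (Hq : D H (mul (meet q p) x)).
    { apply D3; auto. rewrite meet_comm. exact Hpq. }
    split.
    - apply (D2 H (mul (meet q p) x)); auto. apply mono. apply lb_l.
    - right. exists (mul p x), (mul q x). split; [reflexivity|split; [reflexivity|]].
      apply (D2 H (mul (meet q p) x)); auto. apply glb; apply mono.
      + rewrite meet_comm. apply lb_l.
      + apply lb_l. }
  assert (Eml : forall H p q, D H (meet p q) -> E H (Some (meet p q)) (Some p)).
  { intros H p q Hpq. right. exists (meet p q), p. rewrite lb_l. auto. }
  assert (Emr : forall H p q, D H (meet p q) -> E H (Some (meet p q)) (Some q)).
  { intros H p q Hpq. right. exists (meet p q), q. rewrite lb_r. auto. }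
  assert (Dml : forall H p q, D H (meet p q) -> D H p).
  { intros H p q Hpq. apply (D2 H (meet p q)); auto. apply lb_l. }
  assert (Dmr : forall H p q, D H (meet p q) -> D H q).
  { intros H p q Hpq. apply (D2 H (meet p q)); auto. apply lb_r. }
  pose (F := FF mul meet xi delta).
  assert (Fdef : forall x p1 p2, F x p1 p2 <-> fst p2 = fst p1 /\ exists a,
     snd p1 = C (fst p1) a /\ D (fst p1) (lact mul a x) /\
     snd p2 = C (fst p1) (Some (lact mul a x))) by (intros; reflexivity).
  assert (Edef : forall H a b, E H a b <-> a = b \/ exists p q, a = Some p /\ b = Some q /\ D H (meet p q))
    by (intros; reflexivity).
  clearbody F C E D.
  assert (Ftr : forall x p q1 q2, F x p q1 -> F x p q2 -> q1 = q2).
  { intros x [H P] [H1 Q1] [H2 Q2] Hq1 Hq2.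
    apply Fdef in Hq1 as [e1 [a [Ha [Da Q1e]]]]. apply Fdef in Hq2 as [e2 [b [Hb [Db Q2e]]]].
    cbn [fst snd] in *. subst H1 H2. f_equal.
    assert (Eab : E H a b) by (apply clsE; rewrite <- Ha; exact Hb).
    destruct (V3 H a b x Eab Da) as [_ Eq]. rewrite Q1e, Q2e. apply Ecls. exact Eq. }
  assert (Fmul : forall x y, F (mul x y) = tcomp (F x) (F y)).
  { intros x y. apply rel_ext. intros [H P] [H2 Q]. unfold tcomp. split.
    - intros Hf. apply Fdef in Hf as [e [a [Ha [Da Qe]]]]. cbn [fst snd] in *. subst H2.
      rewrite lmul in Da, Qe.
      exists (H, C H (Some (lact mul a x))). split.
      + apply Fdef. simpl. split; [reflexivity|]. exists a. split; [auto|split; auto].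
        apply (D1 H _ y). exact Da.
      + apply Fdef. simpl. split; [reflexivity|]. exists (Some (lact mul a x)).
        simpl. auto.
    - intros [[H1 M] [Hf1 Hf2]].
      apply Fdef in Hf1 as [e1 [a [Ha [Da Me]]]]. apply Fdef in Hf2 as [e2 [b [Hb [Db Qe]]]].
      cbn [fst snd] in *. subst H2 H1.
      assert (Eb : E H b (Some (lact mul a x))) by (apply clsE; rewrite <- Hb; exact Me).
      destruct (V3 H b _ y Eb Db) as [Dxy Exy]. simpl in Dxy, Exy.
      apply Fdef. simpl. split; [reflexivity|]. exists a. rewrite lmul.
      split; [auto|split; auto]. rewrite Qe. apply Ecls. exact Exy. }
  assert (Fmeet : forall x y, F (meet x y) = tcap (F x) (F y)).
  { intros x y. apply rel_ext. intros [H P] [H2 Q]. unfold tcap. split.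
    - intros Hf. apply Fdef in Hf as [e [a [Ha [Da Qe]]]]. cbn [fst snd] in *. subst H2.
      rewrite lmeet in Da, Qe. split; apply Fdef; simpl; split; auto; exists a.
      + split; [auto|split; [eapply Dml; eauto|]]. rewrite Qe. apply Ecls. apply Eml. exact Da.
      + split; [auto|split; [eapply Dmr; eauto|]]. rewrite Qe. apply Ecls. apply Emr. exact Da.
    - intros [Hf1 Hf2].
      apply Fdef in Hf1 as [e1 [a [Ha [Da Qa]]]]. apply Fdef in Hf2 as [e2 [b [Hb [Db Qb]]]].
      cbn [fst snd] in *. subst H2.
      assert (Eba : E H b a) by (apply clsE; rewrite <- Hb; exact Ha).
      destruct (V3 H b a y Eba Db) as [Day Eya].
      assert (Exy : E H (Some (lact mul a x)) (Some (lact mul a y))).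
      { apply (Etrans H _ (Some (lact mul b y))); [|exact Eya].
        apply clsE. rewrite <- Qa. exact Qb. }
      assert (Dm : D H (meet (lact mul a x) (lact mul a y))).
      { apply Edef in Exy. destruct Exy as [Heq|[p [q [Hp [Hq Hpq]]]]].
        - injection Heq as Heq. rewrite Heq, meet_idem. exact Day.
        - injection Hp as <-. injection Hq as <-. exact Hpq. }
      apply Fdef. simpl. split; [reflexivity|]. exists a. rewrite lmeet.
      split; [auto|split; auto]. rewrite Qa.
      apply Ecls. apply Esym. apply Eml. exact Dm. }
  assert (Fbase : forall (H : G -> Prop) x, H x -> F x (H, C H None) (H, C H (Some x))).
  { intros H x Hx. apply Fdef. simpl. split; [reflexivity|]. exists None. simpl. auto. }
  assert (Finj_le : forall x y, F x = F y -> meet x y = x).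
  { intros x y Hxy. set (H0 := fun w : G => w = x).
    assert (Hb := Fbase H0 x eq_refl). rewrite Hxy in Hb.
    apply Fdef in Hb as [_ [b [Hb [Db Qb]]]]. cbn [fst snd] in *.
    assert (Eb : E H0 None b) by (apply clsE; exact Hb).
    apply Edef in Eb. destruct Eb as [<-|[p [q [Hp _]]]]; [|discriminate].
    cbn [fst snd] in *. assert (Exy : E H0 (Some x) (Some y)) by (apply clsE; exact Qb).
    apply Edef in Exy. destruct Exy as [Heq|[p [q [Hp [Hq Hpq]]]]].
    - injection Heq as <-. apply meet_idem.
    - injection Hp as <-. injection Hq as <-.
      destruct (DX _ _ Hpq) as [n [Hn HX]]. apply (proj1 (AX n Hn x y)). exact HX. }
  exists ((G -> Prop) * (option G -> Prop))%type. split; [constructor; exact (fun _ => False, fun _ => False)|].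
  exists (fun f => exists x, F x = f), F. split; [split; [|split]|].
  - intros f [x <-] a b c. apply Ftr.
  - intros f g [x <-] [y <-]. exists (mul x y). apply Fmul.
  - intros f g [x <-] [y <-]. exists (meet x y). apply Fmeet.
  - split; [intros x; exists x; reflexivity|].
    split; [intros f [x <-]; exists x; reflexivity|].
    split; [|split; [exact Fmul|split; [exact Fmeet|split]]].
    + intros x y Hxy. transitivity (meet x y); [symmetry; exact (Finj_le x y Hxy)|].
      rewrite meet_comm. exact (Finj_le y x (eq_sym Hxy)).
    + intros x y. split.
      * intros Hxy [H P] [H1 Q1] [H2 Q2] Hf1 Hf2.
        apply Fdef in Hf1 as [e1 [a [Ha [Da Qa]]]]. apply Fdef in Hf2 as [e2 [b [Hb [Db Qb]]]].
        cbn [fst snd] in *. subst H1 H2. f_equal.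
        assert (Eba : E H b a) by (apply clsE; rewrite <- Hb; exact Ha).
        destruct (V3 H b a y Eba Db) as [Day Eya].
        rewrite Qa, Qb. apply Ecls.
        apply (Etrans H _ (Some (lact mul a y))); [|apply Esym; exact Eya].
        apply Edef. right. exists (lact mul a x), (lact mul a y). split; [reflexivity|split; [reflexivity|]].
        apply D5; auto. destruct a as [a|]; simpl; auto.
      * intros Hxi. set (H0 := fun w : G => w = x \/ w = y).
        assert (Hx := Fbase H0 x (or_introl eq_refl)).
        assert (Hy := Fbase H0 y (or_intror eq_refl)).
        assert (Heq := Hxi _ _ _ Hx Hy).
        assert (Exy : E H0 (Some x) (Some y)).
        { apply clsE. exact (f_equal snd Heq). }
        apply Edef in Exy. destruct Exy as [Heq2|[p [q [Hp [Hq Hpq]]]]].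
        -- injection Heq2 as <-. apply xr.
        -- injection Hp as <-. injection Hq as <-.
           destruct (DX _ _ Hpq) as [n [Hn HX]]. apply (proj1 (proj2 (AX n Hn x y))). exact HX.
    + intros x y. split.
      * intros Hd [H P] [H1 Q] Hf.
        apply Fdef in Hf as [e [a [Ha [Da Qa]]]]. cbn [fst snd] in *. subst H1.
        exists (H, C H (Some (mul (lact mul a x) y))).
        apply Fdef. simpl. split; [reflexivity|]. exists (Some (lact mul a x)). simpl.
        split; [auto|split; auto]. apply D6; auto.
        destruct a as [a|]; simpl; auto.
      * intros Hd. set (H0 := fun w : G => w = x).
        destruct (Hd _ _ (Fbase H0 x eq_refl)) as [c Hc].
        apply Fdef in Hc as [_ [b [Hb [Db _]]]]. cbn [fst snd] in *.
        assert (Eb : E H0 b (Some x)) by (apply clsE; symmetry; exact Hb).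
        destruct (V3 H0 b (Some x) y Eb Db) as [Dxy _]. simpl in Dxy.
        destruct (DX _ _ Dxy) as [n [Hn HX]]. apply (proj2 (proj2 (AX n Hn x y))). exact HX.
Qed.


Theorem theorem2 (G : Type) (mul meet : G -> G -> G) (xi delta : G -> G -> Prop)
  (mul_assoc : forall x y z, mul x (mul y z) = mul (mul x y) z)
  (meet_assoc : forall x y z, meet x (meet y z) = meet (meet x y) z)
  (meet_comm : forall x y, meet x y = meet y x)
  (meet_idem : forall x, meet x x = x) :
  representable mul meet xi delta <->
  ( (* (1) *)
    ((forall x u v, xi u v -> xi (mul x u) (mul x v)) /\
     (forall x y, sle meet x y -> xi x y)) /\
    (* (2) *)
    (forall x y u, delta x y -> delta (mul u x) y) /\
    (* (3) *)
    ((forall x y z, mul x (meet y z) = meet (mul x y) (mul x z)) /\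
     (forall x y u v, sle meet x y -> sle meet u v -> xi y v -> xi u x) /\
     (forall x y u, xi x y -> mul (meet x y) u = meet (mul x u) (mul y u))) /\
    (* (4) *)
    (forall n, 1 <= n -> forall x y,
       (Xn mul meet xi delta n (meet x y) (fun w => w = x) -> meet x y = x) /\
       (Xn mul meet xi delta n (meet x y) (fun w => w = x \/ w = y) -> xi x y) /\
       (Xn mul meet xi delta n (mul x y) (fun w => w = x) -> delta x y)) ).
Proof.
  split.
  - intros [A [_ [Phi [F [Hc Hi]]]]].
    exact (necessity mul meet xi delta A Phi F Hc Hi).
  - apply sufficiency; auto.
Qed.
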